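(* Let $Q\in\mathbb{R}^{n\times n}$ be symmetric positive definite with $Q_{i,i}=1$ for all $i$, whose support graph is a connected tree, and let $c,\lambda\in\mathbb{R}^n$ with $\lambda_i>0$. Then for every node $u$ and every $\alpha\in\mathbb{R}$, $$f_u(\alpha)=\tfrac12 Q_{u,u}\alpha^2+c_u\alpha+\lambda_u\mathbb{1}_\alpha-\sum_{v\in\mathrm{par}(u)}f_v^*(-Q_{u,v}\alpha),$$ where $f_v^*(\beta)=\sup_{\xi\in\mathbb{R}}\{\beta\xi-f_v(\xi)\}$ (with the empty sum equal to $0$ when $u$ is a leaf).
   Context: The support graph of $Q$ is the undirected graph on $\{1,\dots,n\}$ with edge $\{i,j\}$ ($i\ne j$) iff $Q_{i,j}\ne0$. The tree is rooted at $n$ with topological labeling: each non-root node $u$ has a unique neighbor $\mathrm{child}(u)$ on its path to the root, with $u<\mathrm{child}(u)$; $\mathrm{par}(u)=\{v:\mathrm{child}(v)=u\}$. $\mathrm{supp}_u(Q)$ is the subtree of $u$ and all nodes whose path to the root passes through $u$; $n_u$ is its size; $Q_{[u]},c_{[u]},\lambda_{[u]}$ are the restrictions to its nodes. $\mathbb{1}_\alpha=0$ if $\alpha=0$ and $1$ otherwise. The parametric cost is $f_u(\alpha)=\min\{\tfrac12x^\top Q_{[u]}x+c_{[u]}^\top x+\lambda_{[u]}^\top z : x\in\mathbb{R}^{n_u}, z\in\{0,1\}^{n_u}, x_i(1-z_i)=0\ \forall i, x_u=\alpha\}$, where $x_u$ is the coordinate corresponding to node $u$. *)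

(* Defs.v *)
From HB Require Import structures.
From mathcomp Require Import all_boot all_order all_algebra.
From mathcomp Require Import boolp classical_sets reals constructive_ereal ereal.
Set Implicit Arguments. Unset Strict Implicit. Unset Printing Implicit Defensive.
Import Order.TTheory GRing.Theory Num.Theory.
Local Open Scope ring_scope.

Section Defs.
Variables (R : realType) (m : nat).
(* nodes are 'I_m.+1 = {0,...,m}; the paper's nodes 1..n correspond to 0..n-1,
   with n = m.+1; the root (the paper's node n) is ord_max. *)
Notation n := m.+1.
Implicit Types (Q : 'M[R]_n) (c lam : 'I_n -> R).

Definition root : 'I_n := ord_max.

Definition adj Q : rel 'I_n := fun i j => (i != j) && (Q i j != 0).

Definition is_tree Q : Prop :=
  (forall i j, connect (adj Q) i j) /\
  (forall s : seq 'I_n, 3 <= size s -> uniq s -> ~~ cycle (adj Q) s)%N.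

Definition next_to_root Q (u v : 'I_n) : Prop :=
  exists p : seq 'I_n,
    [/\ path (adj Q) u (v :: p), last v p = root & uniq (u :: v :: p)].

Definition topo_labeling Q : Prop :=
  forall u v : 'I_n, u != root -> next_to_root Q u v -> (u < v)%N.

Definition par Q (u : 'I_n) : {set 'I_n} :=
  [set v | (v != root) && `[< next_to_root Q v u >]].

Definition in_subtree Q (u w : 'I_n) : bool :=
  `[< exists p : seq 'I_n,
        [/\ path (adj Q) w p, last w p = root, uniq (w :: p) & u \in w :: p] >].

Definition ind (a : R) : R := (a != 0)%:R.

Definition fcost Q c lam (u : 'I_n) (a : R) : \bar R :=
  ereal_inf [set y : \bar R | exists (x : 'I_n -> R) (z : 'I_n -> bool),
    [/\ forall i, in_subtree Q u i -> x i * (1 - (z i)%:R) = 0,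
        x u = a &
        y = (2^-1 * (\sum_(i | in_subtree Q u i) \sum_(j | in_subtree Q u j)
                       x i * Q i j * x j)
             + \sum_(i | in_subtree Q u i) c i * x i
             + \sum_(i | in_subtree Q u i) lam i * (z i)%:R)%:E]].

Definition fconj Q c lam (v : 'I_n) (b : R) : \bar R :=
  ereal_sup [set y : \bar R | exists xi : R,
    y = ((b * xi)%:E - fcost Q c lam v xi)%E].

Definition posdef Q : Prop :=
  forall x : 'cV[R]_n, x != 0 -> 0 < (x^T *m Q *m x) 0 0.

End Defs.

(* Main.v *)
Require Import Defs.
From HB Require Import structures.
From mathcomp Require Import all_boot all_order all_algebra.
From mathcomp Require Import boolp classical_sets reals constructive_ereal ereal.
From mathcomp Require Import zify ring lra.
Import Order.TTheory GRing.Theory Num.Theory.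
Local Open Scope ring_scope.
Set Implicit Arguments. Unset Strict Implicit. Unset Printing Implicit Defensive.

Lemma sup_sum (R : realType) (I : eqType) (X : Type) (x0 : X) (W : I -> set X)
  (h : I -> X -> R) (s : seq I) (K : \bar R) :
  uniq s -> (forall v, v \in s -> exists y, W v y) ->
  (forall w : I -> X, (forall v, v \in s -> W v (w v)) ->
      (\sum_(v <- s) (h v (w v))%:E <= K)%E) ->
  (\sum_(v <- s) ereal_sup [set (h v y)%:E | y in W v] <= K)%E.
Proof.
elim: s K => [|v s IH] K Us Hne H.
  have := H (fun _ => x0); rewrite !big_nil; apply => v; by rewrite in_nil.
rewrite big_cons.
case/andP: Us => vs Us.
have key y : W v y ->
    (\sum_(v' <- s) ereal_sup [set (h v' y0)%:E | y0 in W v'] <= K - (h v y)%:E)%E.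
  move=> Wy; apply: IH => //.
    by move=> v' v's; apply: Hne; rewrite in_cons v's orbT.
  move=> w Hw; pose w' := fun v' => if v' == v then y else w v'.
  have := H w'; rewrite big_cons /w' eqxx.
  have -> : \sum_(j <- s) (h j (if j == v then y else w j))%:E =
            \sum_(j <- s) (h j (w j))%:E.
    apply: eq_big_seq => j js; case: eqP => // E; subst j.
    by rewrite js in vs.
  rewrite leeBrDl // => -> // v'; rewrite in_cons; case: eqP => [->|_] //=.
  exact: Hw.
have [y0 Wy0] := Hne v (mem_head _ _).
move: (\sum_(v' <- s) _) key => S' key.
case: K H key => [k| |] H key; last 2 first.
- by rewrite leey.
- have := key y0 Wy0; rewrite leeNy_eq => /eqP ->; by rewrite addeNy.
case: S' key => [s'| |] key; last 2 first.
- by have := key y0 Wy0; rewrite leye_eq.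
- by rewrite addeNy leNye.
have hs : (ereal_sup [set (h v y)%:E | y in W v] <= (k - s')%:E)%E.
  apply/ereal_supP => _ [y Wy <-]; have := key y Wy.
  rewrite -EFinB !lee_fin; lra.
move: hs; case: (ereal_sup _) => [t| |] //.
  rewrite -EFinD !lee_fin; lra.
by move=> _; rewrite addNye leNye.
Qed.

Lemma split_has (T : eqType) (P : pred T) s : has P s ->
  exists p1 c p2, [/\ s = p1 ++ c :: p2, P c & ~~ has P p1].
Proof.
elim: s => //= x s IH; case Px: (P x) => /=.
  by move=> _; exists [::], x, s.
move=> /IH [p1 [c [p2 [-> Pc Hp]]]]; exists (x :: p1), c, p2.
by rewrite /= Px.
Qed.

Lemma path_pair (T : Type) (e : rel T) x p l1 a b l2 :
  x :: p = l1 ++ a :: b :: l2 -> path e x p -> e a b.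
Proof.
elim: l1 x p => [|y l1 IH] x p /=.
  by case=> -> ->; case/andP.
case=> -> Ep; rewrite Ep; case: l1 IH Ep => [|z l1] IH Ep /=.
  by case/andP=> _ /andP [].
by case/andP=> _; apply: IH.
Qed.

Section Graph.
Variables (R : realType) (m : nat) (Q : 'M[R]_m.+1).
Hypotheses (hsym : Q^T = Q) (htree : is_tree Q).
Local Notation e := (adj Q).
Local Notation rt := (Defs.root m).

Lemma adj_sym i j : e i j = e j i.
Proof. by rewrite /adj eq_sym -{1}hsym mxE. Qed.

Lemma adj_irr i : e i i = false.
Proof. by rewrite /adj eqxx. Qed.

Lemma last_in (T : eqType) (a : T) p : p != [::] -> last a p \in p.
Proof. by case: p => // y p _; rewrite /= mem_last. Qed.

Lemma no_fork a x p y q : x != y ->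
  path e a (x :: p) -> path e a (y :: q) ->
  last a (x :: p) = last a (y :: q) ->
  uniq (a :: x :: p) -> uniq (a :: y :: q) -> False.
Proof.
move=> xy Pp Pq El Up Uq.
have : has (mem (y :: q)) (x :: p).
  apply/hasP; exists (last a (x :: p)); first exact: last_in.
  by rewrite El; exact: last_in.
case/split_has => p1 [c [p2 [Ep cq Hp1]]].
have [q1 [q2 Eq]] : exists q1 q2, y :: q = q1 ++ c :: q2.
  by case/splitPr: cq => q1 q2; exists q1, q2.
have dis : forall z, z \in p1 -> z \notin q1.
  move=> z zp; apply/negP => zq; move/hasPn: Hp1 => /(_ z zp) /=.
  by rewrite Eq mem_cat zq.
move: (htree.2 (a :: p1 ++ c :: rev q1)).
have Hs : (3 <= size (a :: p1 ++ c :: rev q1))%N.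
  rewrite /= size_cat /= size_rev.
  case: p1 Ep Hp1 dis => [|z p1] Ep _ _; last by rewrite /=; lia.
  case: q1 Eq => [|z q1] Eq; first by case: Ep => E1 _; case: Eq => E2 _; rewrite E1 E2 eqxx in xy.
  by rewrite /=; lia.
have Hu : uniq (a :: p1 ++ c :: rev q1).
  have U1 := Up; have U2 := Uq; rewrite Ep in U1; rewrite Eq in U2.
  rewrite cons_uniq mem_cat in_cons mem_rev !negb_or cat_uniq cons_uniq rev_uniq mem_rev.
  move: U1 U2; rewrite !cons_uniq !cat_uniq !cons_uniq !mem_cat !in_cons !negb_or.
  case/and5P => /and3P [ap1 ac _] up1 /andP [cp1 _] _ _.
  case/and5P => /and3P [aq1 _ _] uq1 /andP [cq1 _] _ _.
  rewrite ap1 ac aq1 up1 cp1 cq1 uq1 /= andbT.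
  apply/hasPn => z; rewrite mem_rev => zq.
  by apply/negP => zp; move: (dis z zp); rewrite zq.
move=> /(_ Hs Hu); apply/negP/negPn.
rewrite /= rcons_cat /= -rev_cons cat_path.
have Pp' : path e a (p1 ++ c :: p2) by rewrite -Ep.
have Pq' : path e a (q1 ++ c :: q2) by rewrite -Eq.
move: Pp'; rewrite cat_path /= => /and3P [-> /= Hc _] /=.
rewrite Hc /=.
have := rev_path e a (rcons q1 c).
rewrite last_rcons belast_rcons => ->.
move: Pq'; rewrite -cat_rcons cat_path => /andP [Hq _].
rewrite (eq_path (e' := e)) //.
by move=> u v; rewrite adj_sym.
Qed.

Lemma path_unique a p q : path e a p -> path e a q -> last a p = last a q ->
  uniq (a :: p) -> uniq (a :: q) -> p = q.
Proof.
elim: p a q => [|x p IH] a [|y q] //=.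
- move=> _ _ El _ /andP [aq _]; exfalso.
  by move: aq; rewrite El mem_last.
- move=> _ _ El /andP [ap _] _; exfalso.
  by move: ap; rewrite -El mem_last.
move=> /andP [ax Pp] /andP [ay Pq] El Up Uq.
case: (eqVneq x y) => [xy|xy].
  subst y; congr (_ :: _); apply: (IH x) => //.
    by case/andP: Up.
  by case/andP: Uq.
exfalso; apply: (@no_fork a x p y q) => //=; by rewrite ?ax ?ay.
Qed.

Definition rpb w p := [&& path e w p, last w p == rt & uniq (w :: p)].

Lemma rp_ex w : exists p, rpb w p.
Proof.
have /connectP [p Pp El] := htree.1 w rt.
move: El; case/shortenP: Pp => p' Pp' Up' _ El.
by exists p'; rewrite /rpb Pp' Up' -El eqxx.
Qed.

Definition rpath w := xchoose (rp_ex w).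

Lemma rpathP w : rpb w (rpath w).
Proof. exact: xchooseP. Qed.

Lemma rp_unique w p : rpb w p -> p = rpath w.
Proof.
move=> /and3P [P1 /eqP L1 U1]; case/and3P: (rpathP w) => P2 /eqP L2 U2.
by apply: (path_unique P1 P2) => //; rewrite L1 L2.
Qed.

Definition Tp w := w :: rpath w.

Lemma Tp_uniq w : uniq (Tp w).
Proof. by case/and3P: (rpathP w). Qed.

Lemma rpath_root : rpath rt = [::].
Proof.
case/and3P: (rpathP rt); case: (rpath rt) => // y p _ /eqP L /andP [H _].
have := mem_last y p; rewrite /= in L; rewrite L => H'.
by rewrite H' in H.
Qed.

Lemma rpath_cons w v p : rpath w = v :: p -> rpath v = p.
Proof.
move=> E; symmetry; apply: rp_unique; case/and3P: (rpathP w); rewrite E /=.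
by move=> /andP [_ P1] L1 /andP [_ U1]; apply/and3P; split.
Qed.

Lemma Tp_suffix i v : v \in Tp i -> exists pre, Tp i = pre ++ Tp v.
Proof.
move Hk : (size (rpath i)) => k; elim: k i Hk => [|k IH] i Hk;
  rewrite {1}/Tp in_cons; case/orP => [/eqP -> | H]; try by exists [::].
  by move: H; case: (rpath i) Hk.
case E: (rpath i) Hk H => [//|y p] /= [Hk] H.
have Ey := rpath_cons E.
have [pre Hpre] : exists pre, Tp y = pre ++ Tp v.
  by apply: IH; rewrite ?Ey //; rewrite /Tp Ey.
by exists (i :: pre); rewrite cat_cons -Hpre /Tp Ey E.
Qed.

Lemma in_subtreeE u w : in_subtree Q u w = (u \in Tp w).
Proof.
apply/asboolP/idP.
  case=> p [P1 L1 U1 Hu]; have E : p = rpath w.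
    by apply: rp_unique; rewrite /rpb P1 L1 eqxx U1.
  by rewrite /Tp -E.
move=> H; exists (rpath w); case/and3P: (rpathP w) => P1 /eqP L1 U1.
by split.
Qed.

Lemma parE u v : (v \in par Q u) = (rpath v == u :: rpath u).
Proof.
rewrite inE; apply/andP/eqP.
  case=> _ /asboolP [p [P1 L1 U1]].
  have E : u :: p = rpath v by apply: rp_unique; rewrite /rpb P1 /= L1 eqxx; exact: U1.
  by rewrite -E (rpath_cons (esym E)).
move=> E; split.
  by apply/eqP => vr; move: E; rewrite vr rpath_root.
apply/asboolP; exists (rpath u); case/and3P: (rpathP v); rewrite E.
by move=> P1 /eqP L1 U1.
Qed.

Lemma par_sub u v i : v \in par Q u -> v \in Tp i -> u \in Tp i.
Proof.
rewrite parE => /eqP E /Tp_suffix [pre ->].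
by rewrite mem_cat /Tp E !inE eqxx !orbT.
Qed.

Lemma sub_par u i : u \in Tp i -> i != u ->
  exists2 v, v \in par Q u & v \in Tp i.
Proof.
move=> /Tp_suffix [pre Hpre] iu.
case/lastP: pre Hpre => [|pre' v] Hpre.
  by move: Hpre iu; rewrite /= /Tp => [[->]]; rewrite eqxx.
rewrite -cats1 -catA /= in Hpre.
exists v; last by rewrite Hpre mem_cat inE eqxx orbT.
rewrite parE; apply/eqP; symmetry; apply: rp_unique.
have := Tp_uniq i; rewrite Hpre cat_uniq => /and3P [_ _ Uv].
rewrite /rpb Uv andbT /Tp /=.
case/and3P: (rpathP u) => -> -> _; rewrite andbT.
case/and3P: (rpathP i) => Pi _ _.
rewrite andbT; apply: (path_pair (l1 := pre') (l2 := rpath u) _ Pi); exact: Hpre.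
Qed.

Lemma par_notin u v : v \in par Q u -> v \notin Tp u.
Proof.
rewrite parE => /eqP E; apply/negP => /Tp_suffix [pre].
rewrite {2}/Tp E => /(congr1 size); rewrite size_cat /= /Tp /=.
by move=> H; lia.
Qed.

Lemma par_disj u v v' i : v \in par Q u -> v' \in par Q u ->
  v \in Tp i -> v' \in Tp i -> v = v'.
Proof.
rewrite !parE => /eqP E /eqP E' /Tp_suffix [pre H] /Tp_suffix [pre' H'].
move: H'; rewrite H /Tp E E' => H'.
have Hs : size pre = size pre'.
  by move/(congr1 size): H'; rewrite !size_cat /= => /eqP; rewrite eqn_add2r => /eqP.
by move/eqP: H'; rewrite eqseq_cat // => /andP [_ /eqP [->]].
Qed.

Lemma edge_par u v i j : v \in par Q u -> v \in Tp i -> u \in Tp j ->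
  v \notin Tp j -> e i j -> i = v /\ j = u.
Proof.
move=> vp vi uj vj eij.
have Eij : j != i by apply/eqP => ji; move: eij; rewrite ji adj_irr.
case: (boolP (j \in Tp i)) => ji; last first.
  exfalso; have E : Tp i = rpath j.
    apply: rp_unique; case/and3P: (rpathP i) => P1 L1 U1.
    apply/and3P; split => //=; first by rewrite adj_sym eij.
    by rewrite ji.
  by move: vj; rewrite /Tp -E in_cons vi orbT.
have [pre Hpre] := Tp_suffix ji.
have Ei : rpath i = Tp j.
  symmetry; apply: rp_unique; case/and3P: (rpathP j) => P1 L1 U1.
  apply/and3P; split => //=; first by rewrite eij.
  apply/andP; split; last exact: U1.
  case: pre Hpre => [|z pre] Hpre.
    by move: Hpre; rewrite /Tp => [[E _]]; rewrite E eqxx in Eij.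
  move: Hpre (Tp_uniq i); rewrite /Tp /= => [[_ Hr]].
  move=> /andP [H _]; move: H; rewrite Hr mem_cat negb_or => /andP [_ H]; exact: H.
have iv : i = v.
  move: vi; rewrite /Tp Ei in_cons => /orP [/eqP -> //|].
  by rewrite (negbTE vj).
split => //; move: vp; rewrite parE -iv Ei /Tp => /eqP [E _]; by [].
Qed.

End Graph.

Section Main.
Variables (R : realType) (m : nat) (Q : 'M[R]_m.+1) (c lam : 'I_m.+1 -> R).
Hypotheses (hsym : Q^T = Q) (htree : is_tree Q).
Local Notation n := m.+1.

Definition Sb (v : 'I_n) : {set 'I_n} := [set i | in_subtree Q v i].

Lemma inSb v i : (i \in Sb v) = (v \in Tp htree i).
Proof. rewrite /Sb. rewrite finset.in_set. by rewrite (in_subtreeE hsym htree). Qed.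

Lemma sum_part u (F : 'I_n -> R) : \sum_(i | in_subtree Q u i) F i =
  F u + \sum_(v in par Q u) \sum_(i | in_subtree Q v i) F i.
Proof.
have uu : in_subtree Q u u by rewrite (in_subtreeE hsym htree) mem_head.
rewrite (bigD1 u) //=; congr (_ + _).
pose F' v := if v \in par Q u then Sb v else finset.set0.
rewrite (eq_bigl (fun i => i \in \bigcup_v F' v)); last first.
  move=> i; apply/andP/bigcupP.
    case=> H iu; rewrite (in_subtreeE hsym htree) in H.
    have [v vp vi] := sub_par hsym H iu.
    by exists v => //; rewrite /F' vp /Sb finset.in_set (in_subtreeE hsym htree).
  case=> v _; rewrite /F'; case: ifP => vp; last by rewrite inE.
  rewrite /Sb finset.in_set (in_subtreeE hsym htree) => vi; split.
    by rewrite (in_subtreeE hsym htree); apply: (par_sub hsym vp).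
  apply/eqP => iu; subst i.
  by move: (par_notin hsym htree vp); rewrite vi.
rewrite partition_disjoint_bigcup; last first.
  move=> v v' vv'; rewrite /F'.
  case: ifP => vp; last by apply: eq_disjoint0 => i; rewrite inE.
  case: ifP => v'p; last by rewrite disjoint_sym; apply: eq_disjoint0 => i; rewrite inE.
  apply/pred0P => i /=; apply/negP => /andP [].
  rewrite /Sb !finset.in_set !(in_subtreeE hsym htree) => vi v'i.
  by move: vv'; rewrite (par_disj hsym vp v'p vi v'i) eqxx.
rewrite [RHS]big_mkcond /=; apply: eq_bigr => v _; rewrite /F'.
case: ifP => vp; last by rewrite big_set0.
by apply: eq_bigl => i; rewrite inE.
Qed.

Lemma st_self u : in_subtree Q u u.
Proof. by rewrite (in_subtreeE hsym htree) mem_head. Qed.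

Lemma st_par u v i : v \in par Q u -> in_subtree Q v i -> in_subtree Q u i.
Proof.
rewrite !(in_subtreeE hsym htree) => vp vi; exact: (par_sub hsym vp).
Qed.

Lemma Qsym i j : Q i j = Q j i.
Proof. by rewrite -{1}hsym mxE. Qed.

Lemma Z1 u v j : v \in par Q u -> in_subtree Q v j -> j != v -> Q j u = 0.
Proof.
move=> vp; rewrite (in_subtreeE hsym htree) => vj jv.
apply/eqP; apply/negPn/negP => Hq.
have vu := par_notin hsym htree vp.
have ju : j != u by apply/eqP => E; move: vj; rewrite E (negbTE vu).
have := edge_par hsym vp vj (mem_head _ _) vu.
by rewrite /adj ju Hq => /(_ isT) [E _]; rewrite E eqxx in jv.
Qed.

Lemma Z2 u v v' i j : v \in par Q u -> v' \in par Q u -> v != v' ->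
  in_subtree Q v i -> in_subtree Q v' j -> Q i j = 0.
Proof.
move=> vp v'p vv'; rewrite !(in_subtreeE hsym htree) => vi v'j.
apply/eqP; apply/negPn/negP => Hq.
have uj := par_sub hsym v'p v'j.
have vj : v \notin Tp htree j.
  by apply/negP => vj; move: vv'; rewrite (par_disj hsym vp v'p vj v'j) eqxx.
have ij : i != j by apply/eqP => E; move: vj; rewrite -E vi.
have := edge_par hsym vp vi uj vj.
rewrite /adj ij Hq => /(_ isT) [_ E]; subst j.
by move: (par_notin hsym htree v'p); rewrite v'j.
Qed.

Definition J u (x : 'I_n -> R) (z : 'I_n -> bool) : R :=
  2^-1 * (\sum_(i | in_subtree Q u i) \sum_(j | in_subtree Q u j)
                       x i * Q i j * x j)
             + \sum_(i | in_subtree Q u i) c i * x i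
             + \sum_(i | in_subtree Q u i) lam i * (z i)%:R.

Lemma DEC u x z : J u x z = 2^-1 * Q u u * x u ^+ 2 + c u * x u + lam u * (z u)%:R
  + \sum_(v in par Q u) (Q u v * x u * x v + J v x z).
Proof.
pose F i j := x i * Q i j * x j.
have E1 v : v \in par Q u -> \sum_(j | in_subtree Q v j) F u j = F u v.
  move=> vp; rewrite (bigD1 v) ?st_self //= big1 ?addr0 // => j /andP [vj jv].
  by rewrite /F Qsym (Z1 vp vj jv) mulr0 mul0r.
have E2 v : v \in par Q u -> \sum_(i | in_subtree Q v i) F i u = F v u.
  move=> vp; rewrite (bigD1 v) ?st_self //= big1 ?addr0 // => j /andP [vj jv].
  by rewrite /F (Z1 vp vj jv) mulr0 mul0r.
have E3 v i : v \in par Q u -> in_subtree Q v i ->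
   \sum_(v' in par Q u) \sum_(j | in_subtree Q v' j) F i j
   = \sum_(j | in_subtree Q v j) F i j.
  move=> vp vi; rewrite (bigD1 v) //= [X in _ + X]big1 ?addr0 // => v' /andP [v'p v'v].
  rewrite big1 // => j v'j.
  by rewrite /F (Z2 vp v'p _ vi v'j) ?mulr0 ?mul0r // eq_sym.
have Equad : \sum_(i | in_subtree Q u i) \sum_(j | in_subtree Q u j) F i j =
   F u u + \sum_(v in par Q u) F u v + \sum_(v in par Q u) F v u
   + \sum_(v in par Q u) \sum_(i | in_subtree Q v i) \sum_(j | in_subtree Q v j) F i j.
  rewrite sum_part sum_part -!addrA; congr (_ + _).
  rewrite (eq_bigr (fun v => F u v)); last by move=> v vp; rewrite E1.
  congr (_ + _).
  rewrite -big_split /=; apply: eq_bigr => v vp.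
  rewrite (eq_bigr (fun i => F i u + \sum_(j | in_subtree Q v j) F i j)); last first.
    by move=> i vi; rewrite sum_part (E3 v i vp vi).
  by rewrite big_split /= E2.
rewrite /J Equad !sum_part.
have -> : \sum_(v in par Q u) F v u = \sum_(v in par Q u) F u v.
  by apply: eq_bigr => v _; rewrite /F (Qsym v u); ring.
rewrite !big_split /= -!mulr_sumr.
have -> : \sum_(v in par Q u) Q u v * x u * x v = \sum_(v in par Q u) F u v.
  by apply: eq_bigr => v _; rewrite /F (mulrC (Q u v)).
rewrite /F; set A := \sum_(v in par Q u) _.
rewrite /J. set B := \sum_(i in par Q u) _.
set C := \sum_(i in par Q u) _. set L := \sum_(i in par Q u) _.
by field.
Qed.

Definition feas u (x : 'I_n -> R) (z : 'I_n -> bool) :=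
  forall i, in_subtree Q u i -> x i * (1 - (z i)%:R) = 0.

Lemma fcostE u a : fcost Q c lam u a =
  ereal_inf [set y | exists x z, [/\ feas u x z, x u = a & y = (J u x z)%:E]].
Proof. by []. Qed.

Lemma fcost_le v x z : feas v x z -> (fcost Q c lam v (x v) <= (J v x z)%:E)%E.
Proof. move=> fx; rewrite fcostE; apply: ge_ereal_inf; exists (J v x z)%:E => //.
by exists x, z.
Qed.

Lemma feas_par u v x z : v \in par Q u -> feas u x z -> feas v x z.
Proof. by move=> vp fx i vi; apply: fx; apply: st_par vi. Qed.

Lemma feas0 v : feas v (fun _ => 0) (fun _ => true).
Proof. by move=> i _; rewrite mul0r. Qed.

Lemma feas0' v a : feas v (fun i => if i == v then a else 0) (fun _ => true).
Proof. by move=> i _; rewrite subrr mulr0. Qed.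

Definition hh v b (w : ('I_n -> R) * ('I_n -> bool)) := b * w.1 v - J v w.1 w.2.
Definition WW v : set (('I_n -> R) * ('I_n -> bool)) := [set w | feas v w.1 w.2].

Lemma fconjE v b : fconj Q c lam v b = ereal_sup [set (hh v b w)%:E | w in WW v].
Proof.
apply/eqP; rewrite eq_le; apply/andP; split.
  rewrite /fconj; apply/ereal_supP => _ [xi ->].
  have Hel : forall w, WW v w -> ((hh v b w)%:E <= ereal_sup [set (hh v b w)%:E | w in WW v])%E.
    by move=> w Ww; apply: le_ereal_sup_tmp; exists (hh v b w)%:E => //; exists w.
  move: (ereal_sup _) Hel => Sp Hel.
  case: Sp Hel => [sp| |] Hel; last 2 first.
  - by rewrite leey.
  - by have := Hel (fun _ => 0, fun _ => true) (feas0 (v:=v)); rewrite leeNy_eq.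
  have Hf : ((b * xi - sp)%:E <= fcost Q c lam v xi)%E.
    rewrite fcostE; apply/ereal_infP => _ [x [z [fx xv ->]]].
    have := Hel (x, z) fx; rewrite /hh /= xv !lee_fin => ?; lra.
  move: Hf; case: (fcost Q c lam v xi) => [f| |] //.
  by rewrite -EFinB !lee_fin => ?; lra.
  by move=> _; rewrite addeNy leNye.
apply/ereal_supP => _ [w Ww <-].
have H1 := fcost_le Ww.
apply: (@le_trans _ _ ((b * w.1 v)%:E - fcost Q c lam v (w.1 v))%E).
  by rewrite /hh EFinB; apply: leeB.
by apply: le_ereal_sup_tmp; exists ((b * w.1 v)%:E - fcost Q c lam v (w.1 v))%E => //; exists (w.1 v).
Qed.

Lemma J_ext v x z x' z' : (forall i, in_subtree Q v i -> x i = x' i /\ z i = z' i) ->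
  J v x z = J v x' z'.
Proof.
move=> H; rewrite /J; congr (_ * _ + _ + _).
- apply: eq_bigr => i vi; apply: eq_bigr => j vj.
  by rewrite (H i vi).1 (H j vj).1.
- by apply: eq_bigr => i vi; rewrite (H i vi).1.
- by apply: eq_bigr => i vi; rewrite (H i vi).2.
Qed.

Hypothesis hlam : forall i, 0 < lam i.

Lemma main_le u a :
  (fcost Q c lam u a <= (2^-1 * Q u u * a ^+ 2 + c u * a + lam u * ind a)%:E
     - \sum_(v in par Q u) fconj Q c lam v (- Q u v * a))%E.
Proof.
set r := 2^-1 * Q u u * a ^+ 2 + c u * a + lam u * ind a.
pose x0 : ('I_n -> R) * ('I_n -> bool) := (fun _ => 0, fun _ => true).
have glue : forall w : 'I_n -> ('I_n -> R) * ('I_n -> bool),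
    (forall v, v \in enum (par Q u) -> WW v (w v)) ->
    (\sum_(v <- enum (par Q u)) (hh v (- Q u v * a) (w v))%:E
        <= r%:E - fcost Q c lam u a)%E.
  move=> w Hw.
  pose x i := if i == u then a else
     if [pick v in par Q u | in_subtree Q v i] is Some v then (w v).1 i else 0.
  pose z i := if i == u then a != 0 else
     if [pick v in par Q u | in_subtree Q v i] is Some v then (w v).2 i else false.
  have Hxz v i : v \in par Q u -> in_subtree Q v i -> x i = (w v).1 i /\ z i = (w v).2 i.
    move=> vp vi.
    have iu : i != u.
      apply/eqP => E; subst i; move: (par_notin hsym htree vp).
      by rewrite -(in_subtreeE hsym htree) vi.
    rewrite /x /z (negbTE iu); case: pickP => [v' /andP [v'p v'i] | H].
      suff -> : v' = v by [].
      move: v'i vi; rewrite !(in_subtreeE hsym htree) => v'i vi.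
      exact: (par_disj hsym v'p vp v'i vi).
    by move: (H v); rewrite vp vi.
  have fx : feas u x z.
    move=> i ui; case: (eqVneq i u) => [->|iu].
      rewrite /x /z eqxx; case: eqP => [->|_]; first by rewrite mul0r.
      by rewrite subrr mulr0.
    move: ui; rewrite (in_subtreeE hsym htree) => ui.
    have [v vp vi] := sub_par hsym ui iu.
    rewrite -(in_subtreeE hsym htree) in vi.
    have [-> ->] := Hxz v i vp vi.
    by apply: (Hw v); rewrite ?mem_enum.
  have xu : x u = a by rewrite /x eqxx.
  have Hle := fcost_le fx; rewrite xu in Hle.
  have EJ : J u x z = r - \sum_(v <- enum (par Q u)) hh v (- Q u v * a) (w v).
    rewrite DEC xu /z eqxx /r /ind big_enum /= -sumrN -!addrA; congr (_ + (_ + _)).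
    congr (_ + _); apply: eq_bigr => v vp.
    rewrite /hh (J_ext (x' := (w v).1) (z' := (w v).2)); last by move=> i; apply: Hxz.
    have [-> _] := Hxz v v vp (st_self v).
    by ring.
  rewrite EJ in Hle; rewrite sumEFin.
  move: Hle; case: (fcost Q c lam u a) => [f| |] //.
    rewrite -EFinB !lee_fin => ?; lra.
  by rewrite leey.
have HK : (\sum_(v in par Q u) fconj Q c lam v (- Q u v * a) <= r%:E - fcost Q c lam u a)%E.
  rewrite (eq_bigr (fun v => ereal_sup [set (hh v (- Q u v * a) w)%:E | w in WW v]));
    last by move=> v _; rewrite fconjE.
  rewrite -big_enum; apply: (sup_sum x0) => //; first exact: enum_uniq.
  by move=> v _; exists x0; exact: (feas0 (v:=v)).
have Hfin : (fcost Q c lam u a <= (J u (fun i => if i == u then a else 0) (fun _ => true))%:E)%E.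
  have := fcost_le (feas0' (v:=u) a); by rewrite eqxx.
move: HK Hfin; case: (fcost Q c lam u a) => [f| |] //; last by move=> _ _; rewrite leNye.
case: (\sum_(v in par Q u) _) => [s| |] //.
  by rewrite -!EFinB !lee_fin => ? ?; lra.
by move=> _ _; rewrite /= leey.
Qed.

Lemma main_ge u a :
  ((2^-1 * Q u u * a ^+ 2 + c u * a + lam u * ind a)%:E
     - \sum_(v in par Q u) fconj Q c lam v (- Q u v * a) <= fcost Q c lam u a)%E.
Proof.
rewrite fcostE; apply/ereal_infP => _ [x [z [fx xu ->]]].
have H1 : (\sum_(v in par Q u) (hh v (- Q u v * a) (x, z))%:E
           <= \sum_(v in par Q u) fconj Q c lam v (- Q u v * a))%E.
  apply: lee_sum => v vp; rewrite fconjE; apply: le_ereal_sup_tmp.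
  exists (hh v (- Q u v * a) (x, z))%:E => //; exists (x, z) => //.
  exact: (feas_par vp fx).
apply: le_trans (leeB (lexx _) H1) _.
rewrite sumEFin -EFinB lee_fin DEC xu.
have Hind : lam u * ind a <= lam u * (z u)%:R.
  rewrite ler_wpM2l ?(ltW (hlam u)) // /ind.
  case: eqP => [_|/eqP a0]; first by case: (z u).
  have := fx u (st_self u); rewrite xu; case: (z u) => //=.
  by rewrite subr0 mulr1 => /eqP; rewrite (negbTE a0).
rewrite -sumrN.
have -> : \sum_(v in par Q u) - hh v (- Q u v * a) (x, z) =
          \sum_(v in par Q u) (Q u v * a * x v + J v x z).
  by apply: eq_bigr => v _; rewrite /hh /=; ring.
lra.
Qed.

End Main.

Unset Implicit Arguments.
Theorem mainTheorem3 (R : realType) (m : nat) (Q : 'M[R]_m.+1)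
  (c lam : 'I_m.+1 -> R) :
  Q^T = Q -> posdef Q -> (forall i, Q i i = 1) ->
  is_tree Q -> topo_labeling Q ->
  (forall i, 0 < lam i) ->
  forall (u : 'I_m.+1) (a : R),
    fcost Q c lam u a =
    ((2^-1 * Q u u * a ^+ 2 + c u * a + lam u * ind a)%:E
     - \sum_(v in par Q u) fconj Q c lam v (- Q u v * a))%E.
Proof.
move=> hsym _ _ htree _ hlam u a.
apply/eqP; rewrite eq_le; apply/andP; split.
  exact: main_le.
exact: main_ge.
Qed.
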